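(* Consider the factorized (COM) cost model described in the context, applied to the join phase that follows a full semijoin reduction. In that phase every non-root node $i$ has match probability $m_i=1$ (and fanout $fo_i\ge 1$). Then all valid join orders of the instance have the same cost; that is, the cost is independent of the join order.
   Context: **Instance.** An instance consists of the following data. - A rooted tree $\mathcal{J}$ whose root $r$ is the driver relation (here, already fully reduced) and whose non-root nodes are join operators. - A number $N>0$, the driver cardinality. - For each non-root node $i$: a match probability $m_i\in[0,1]$, a fanout $fo_i\ge1$ (a real number), and a per-probe cost $c_i>0$. By convention $m_r=1$. **Valid join orders.** A valid join order is a sequence listing every non-root node exactly once, such that each node whose parent is not $r$ appears after its parent. **Survival probability.** Let $T$ be a connected set of nodes with top node $v$ (that is, $T$ contains $v$ and, for each of its members other than $v$, also that member's parent). Define recursively $$m_T=m_v\Big(1-\big(1-\prod_u m_{T_u}\big)^{fo_v}\Big).$$ The product ranges over the children $u$ of $v$ in $T$, and $T_u$ is the set of nodes of $T$ in the subtree rooted at $u$. An empty product equals $1$. **Number of probes.** Suppose node $l$ is placed when the set of already placed nodes is $S$, where $S$ contains $r$ and the earlier non-root nodes. Let $r=a_0,\dots,a_k$ be the proper ancestors of $l$, listed from the root down to its parent. Let $T(u,S)$ be the set of nodes of $S$ in the subtree rooted at $u$. Then $$\mathrm{probes}(l,S)=N\prod_{j=1}^{k}m_{a_j}fo_{a_j}\times\prod_{j=0}^{k}\prod_{u}m_{T(u,S)}.$$ Here the inner product is over the children $u$ of $a_j$ with $u\in S$ and $u\notin\{a_{j+1},l\}$. **Cost of an order.** The cost of a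 valid order $\sigma$ is $\sum_l c_l\,\mathrm{probes}(l,S_l)$, where $S_l$ is the set consisting of $r$ and the nodes preceding $l$ in $\sigma$. *)

(* Defs.v *)
From mathcomp Require Import all_boot all_order all_algebra.
From mathcomp Require Import reals exp.
Set Implicit Arguments. Unset Strict Implicit. Unset Printing Implicit Defensive.
Import Order.TTheory GRing.Theory Num.Theory.
Local Open Scope ring_scope.

Section COM.
Variables (R : realType) (T : finType) (r : T) (par : T -> T).

(* A rooted tree on the node type T: par is the parent map, the root r is
   its own "parent", and every node reaches r by iterating par. *)
Definition is_rooted_tree : Prop :=
  par r = r /\ forall x : T, exists k : nat, iter k par x = r.

Definition desc (u x : T) : bool :=
  [exists k : 'I_#|T|.+1, iter k par x == u].

Definition childS (S : {set T}) (v u : T) : bool :=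
  [&& u \in S, par u == v & u != r].

Variables (m fo c : T -> R) (N : R).

(* m_{T(v,S)}: survival probability of the connected set of nodes of S in the
   subtree rooted at v (top node v), computed recursively with fuel. *)
Fixpoint mT (k : nat) (S : {set T}) (v : T) : R :=
  match k with
  | 0 => m v
  | k'.+1 => m v * (1 - (1 - \prod_(u | childS S v u) mT k' S u) `^ fo v)
  end.

Definition mTS (S : {set T}) (u : T) : R := mT #|T| S u.

Definition proper_anc (l a : T) : bool := desc a l && (a != l).

Definition probes (l : T) (S : {set T}) : R :=
  N * (\prod_(a | proper_anc l a && (a != r)) (m a * fo a))
    * \prod_(a | proper_anc l a)
        \prod_(u | childS S a u && ~~ desc u l) mTS S u.

Definition valid_order (s : seq T) : Prop :=
  uniq s /\ (forall x, (x \in s) = (x != r)) /\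
  (forall l, l \in s -> par l != r -> index (par l) s < index l s)%N.

Definition placed (s : seq T) (i : nat) : {set T} :=
  r |: [set x in take i s].

Definition cost (s : seq T) : R :=
  \sum_(i < size s) c (nth r s i) * probes (nth r s i) (placed s i).

End COM.

(* Main.v *)
Require Import Defs.
From mathcomp Require Import all_boot all_order all_algebra.
From mathcomp Require Import reals exp.
Import Order.TTheory GRing.Theory Num.Theory.
Local Open Scope ring_scope.

Lemma mT_one (R : realType) (T : finType) (r : T) (par : T -> T)
    (m fo : T -> R) :
  (forall i, i != r -> 1 <= fo i) ->
  (forall i, i != r -> m i = 1) ->
  forall k S v, v != r -> mT r par m fo k S v = 1.
Proof.
move=> hfo hm; elim=> [|k IH] S v hv /=; first exact: hm.
rewrite big1; last by move=> u /and3P[_ _ hu]; exact: IH.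
rewrite subrr powR0 ?subr0 ?mulr1 ?hm //.
by have := hfo v hv; apply: contraTneq => ->; rewrite ler10.
Qed.

Theorem theorem3p5 (R : realType) (T : finType) (r : T) (par : T -> T)
    (m fo c : T -> R) (N : R) :
  is_rooted_tree r par ->
  0 < N ->
  m r = 1 ->
  (forall i, i != r -> 0 <= m i <= 1) ->
  (forall i, i != r -> 1 <= fo i) ->
  (forall i, i != r -> 0 < c i) ->
  (forall i, i != r -> m i = 1) ->
  forall s1 s2 : seq T,
    valid_order r par s1 -> valid_order r par s2 ->
    cost r par m fo c N s1 = cost r par m fo c N s2.
Proof.
move=> _ _ _ _ hfo _ hm.
pose F := fun l : T => c l * (N * \prod_(a | proper_anc par l a && (a != r)) (m a * fo a)).
have key : forall s, cost r par m fo c N s = \sum_(x <- s) F x.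
  move=> s; rewrite /cost (big_nth r) big_mkord; apply: eq_bigr => i _.
  rewrite /F /probes; congr (_ * _).
  rewrite [X in _ * X]big1 ?mulr1 // => a _; apply: big1 => u /andP[/and3P[_ _ hu] _].
  exact: mT_one.
move=> s1 s2 [u1 [h1 _]] [u2 [h2 _]]; rewrite !key; apply: perm_big.
by apply: uniq_perm => // x; rewrite h1 h2.
Qed.
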